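(* Let $E$ be a JB$^*$-triple in which tripotents are norm-total, and let $T:E\to E$ be a bounded linear map. The following are equivalent: (a) $T$ is a triple derivation; (b) for each tripotent $e\in E$, the map $(P_0(e)+P_2(e))T|_{E_0(e)\oplus E_2(e)}:E_0(e)\oplus E_2(e)\to E_0(e)\oplus E_2(e)$ is a triple derivation of the JB$^*$-subtriple $E_0(e)\oplus E_2(e)$; (c) for each tripotent $e\in E$, the map $P_2(e)T|_{E_2(e)}:E_2(e)\to E_2(e)$ is a triple derivation of $E_2(e)$ and $P_0(e)T(e)=0$.
   Context: A JB$^*$-triple is a complex Banach space $E$ with a continuous triple product $\{\cdot,\cdot,\cdot\}$, bilinear and symmetric in the outer variables and conjugate-linear in the middle one, satisfying the Jordan identity $L(a,b)L(x,y)=L(x,y)L(a,b)+L(L(a,b)x,y)-L(x,L(b,a)y)$, such that $L(a,a)$ is hermitian with non-negative spectrum and $\|\{a,a,a\}\|=\|a\|^3$, where $L(a,b)x=\{a,b,x\}$. Elements $a,b$ are orthogonal ($a\perp b$) if $L(a,b)=0$. A tripotent is $e\in E$ with $\{e,e,e\}=e$; it induces the Peirce decomposition $E=E_2(e)\oplus E_1(e)\oplus E_0(e)$, $E_j(e)=\{x:\{e,e,x\}=\tfrac j2 x\}$, with Peirce projections $P_j(e)$ onto $E_j(e)$; each $E_j(e)$ and $E_0(e)\oplus E_2(e)$ are JB$^*$-subtriples. Tripotents are norm-total in $E$ if every element of $E$ is a norm limit of finite linear combinations of mutually orthogonal tripotents. A linear map $\delta$ is a triple derivation if $\delta\{a,b,c\}=\{\delta(a),b,c\}+\{a,\delta(b),c\}+\{a,b,\delta(c)\}$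 for all $a,b,c$. *)

(* Defs.v *)
From HB Require Import structures.
From mathcomp Require Import all_boot all_order all_algebra.
From mathcomp Require Import complex.
From mathcomp Require Import all_classical all_reals all_analysis.
Set Implicit Arguments. Unset Strict Implicit. Unset Printing Implicit Defensive.
Import Order.TTheory GRing.Theory Num.Theory ComplexField.
Import numFieldNormedType.Exports.
Local Open Scope ring_scope.

Section JB.
Variables (R : realType) (E : completeNormedModType R[i]).
Variable tp : E -> E -> E -> E.

Definition Lop (a b : E) : E -> E := fun x => tp a b x.

Definition unit_ball_functional (f : E -> R[i]) : Prop :=
  [/\ (forall u v, f (u + v) = f u + f v),
      (forall (k : R[i]) u, f (k *: u) = k * f u) &
      (forall y, `|f y| <= `|y|)].

(* hermitian operator: numerical range (Lumer) is real *)
Definition hermitian (S : E -> E) : Prop :=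
  forall (x : E) (f : E -> R[i]), `|x| = 1 -> unit_ball_functional f ->
    f x = 1 -> complex.Im (f (S x)) = 0.

(* spectrum of S (in B(E)) is contained in [0, +oo) *)
Definition nonneg_spectrum (S : E -> E) : Prop :=
  forall lam : R[i], ~ (complex.Im lam = 0 /\ 0 <= complex.Re lam) ->
    exists g : E -> E, [/\ continuous g,
       (forall x, g (S x - lam *: x) = x) &
       (forall x, S (g x) - lam *: g x = x)].

Definition is_JBstar_triple : Prop :=
  [/\ (
      (forall a a' b c (k : R[i]), tp (k *: a + a') b c = k *: tp a b c + tp a' b c) /\
      (forall a b c, tp a b c = tp c b a)),
      (forall a b b' c (k : R[i]), tp a (k *: b + b') c = (k^*)%C *: tp a b c + tp a b' c) /\
      continuous (fun p : E * E * E => tp p.1.1 p.1.2 p.2),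
      (forall a b x y z,
        Lop a b (Lop x y z) =
        Lop x y (Lop a b z) + Lop (Lop a b x) y z - Lop x (Lop b a y) z),
      (forall a, hermitian (Lop a a) /\ nonneg_spectrum (Lop a a)) &
      (forall a, `|tp a a a| = `|a| ^+ 3)].

Definition orthogonal (a b : E) : Prop := forall x, tp a b x = 0.

Definition tripotent (e : E) : Prop := tp e e e = e.

Definition tripotents_norm_total : Prop :=
  forall (x : E) (eps : R), 0 < eps ->
    exists s : seq (R[i] * E),
      [/\ (forall i, (i < size s)%N -> tripotent (nth (0, 0) s i).2),
          (forall i j, (i < j)%N -> (j < size s)%N ->
             orthogonal (nth (0, 0) s i).2 (nth (0, 0) s j).2) &
          `|x - \sum_(p <- s) p.1 *: p.2| < (eps%:C)%C].

Definition Qop (e : E) : E -> E := fun x => tp e x e.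
Definition P2 (e : E) : E -> E := fun x => Qop e (Qop e x).
Definition P1 (e : E) : E -> E := fun x => 2%:R *: (Lop e e x - Qop e (Qop e x)).
Definition P0 (e : E) : E -> E :=
  fun x => x - 2%:R *: Lop e e x + Qop e (Qop e x).

Definition Peirce (j : nat) (e : E) : set E :=
  fun x => tp e e x = (j%:R / 2%:R : R[i]) *: x.

Definition Peirce02 (e : E) : set E :=
  fun x => exists x0 x2, [/\ Peirce 0 e x0, Peirce 2 e x2 & x = x0 + x2].

Definition triple_derivation (D : E -> E) : Prop :=
  forall a b c, D (tp a b c) = tp (D a) b c + tp a (D b) c + tp a b (D c).

Definition triple_derivation_on (F : set E) (D : E -> E) : Prop :=
  (forall x, F x -> F (D x)) /\
  (forall a b c, F a -> F b -> F c ->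
     D (tp a b c) = tp (D a) b c + tp a (D b) c + tp a b (D c)).

End JB.

(* Main.v *)
Require Import Defs.
From HB Require Import structures.
From mathcomp Require Import all_boot all_order all_algebra.
From mathcomp Require Import complex.
From mathcomp Require Import all_classical all_reals all_analysis.
From mathcomp Require Import ring zify.
From Stdlib Require Import Lia.
Set Implicit Arguments. Unset Strict Implicit. Unset Printing Implicit Defensive.
Import Order.TTheory GRing.Theory Num.Theory ComplexField.
Import numFieldNormedType.Exports.
Local Open Scope ring_scope.
Notation ix n k := (@Ordinal n k isT).
Section LC.
Variables (R : realType) (E : completeNormedModType R[i]).
Definition lc n (c : 'I_n -> R[i]) (v : 'I_n -> E) := \sum_i c i *: v i.
Lemma lcD n (c d : 'I_n -> R[i]) (v : 'I_n -> E) : lc c v + lc d v = lc (fun i => c i + d i) v.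
Proof. by rewrite /lc -big_split /=; apply: eq_bigr => i _; rewrite scalerDl. Qed.
Lemma lcN n (c : 'I_n -> R[i]) (v : 'I_n -> E) : - lc c v = lc (fun i => - c i) v.
Proof. by rewrite /lc -sumrN; apply: eq_bigr => i _; rewrite scaleNr. Qed.
Lemma lcB n (c d : 'I_n -> R[i]) (v : 'I_n -> E) : lc c v - lc d v = lc (fun i => c i - d i) v.
Proof. by rewrite lcN lcD. Qed.
Lemma lcZ n k (c : 'I_n -> R[i]) (v : 'I_n -> E) : k *: lc c v = lc (fun i => k * c i) v.
Proof. by rewrite /lc scaler_sumr; apply: eq_bigr => i _; rewrite scalerA. Qed.
Lemma lcMn n m (c : 'I_n -> R[i]) (v : 'I_n -> E) : lc c v *+ m = lc (fun i => m%:R * c i) v.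
Proof. by rewrite -scaler_nat lcZ. Qed.
Lemma lc_ext n (c d : 'I_n -> R[i]) (v : 'I_n -> E) : (forall i : 'I_n, c i = d i) -> lc c v = lc d v.
Proof. by move=> h; apply: eq_bigr => i _; rewrite h. Qed.
Lemma lc_atom n (v : 'I_n -> E) (j : 'I_n) : v j = lc (fun i => (nat_of_ord i == nat_of_ord j)%:R) v.
Proof.
rewrite /lc (bigD1 j) //= eqxx scale1r big1 ?addr0 // => i /negbTE.
by rewrite -(inj_eq val_inj) => ->; rewrite scale0r.
Qed.
Lemma lc0 n (v : 'I_n -> E) (c : 'I_n -> R[i]) : (forall i, c i = 0) -> lc c v = 0.
Proof. by move=> h; rewrite /lc big1 // => i _; rewrite h scale0r. Qed.
End LC.

Ltac lc_ext_tac := apply: lc_ext => -[[|[|[|[|[|[|[|]]]]]]] ?] //=.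
Section LC2.
Variables (R : realType) (E : completeNormedModType R[i]).
Lemma lc_comb1 n (v : 'I_n -> E) (g c1 : 'I_n -> R[i]) k1 :
  lc c1 v = 0 -> (forall i, g i = k1 * c1 i) -> lc g v = 0.
Proof. by move=> h1 h; rewrite (lc_ext _ h) -lcZ h1 scaler0. Qed.
Lemma lc_comb2 n (v : 'I_n -> E) (g c1 c2 : 'I_n -> R[i]) k1 k2 :
  lc c1 v = 0 -> lc c2 v = 0 -> (forall i, g i = k1 * c1 i + k2 * c2 i) -> lc g v = 0.
Proof. by move=> h1 h2 h; rewrite (lc_ext _ h) -lcD -!lcZ h1 h2 !scaler0 addr0. Qed.
Lemma lc_comb3 n (v : 'I_n -> E) (g c1 c2 c3 : 'I_n -> R[i]) k1 k2 k3 :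
  lc c1 v = 0 -> lc c2 v = 0 -> lc c3 v = 0 ->
  (forall i, g i = k1 * c1 i + k2 * c2 i + k3 * c3 i) -> lc g v = 0.
Proof. by move=> h1 h2 h3 h; rewrite (lc_ext _ h) -!lcD -!lcZ h1 h2 h3 !scaler0 !addr0. Qed.
Lemma lc_comb4 n (v : 'I_n -> E) (g c1 c2 c3 c4 : 'I_n -> R[i]) k1 k2 k3 k4 :
  lc c1 v = 0 -> lc c2 v = 0 -> lc c3 v = 0 -> lc c4 v = 0 ->
  (forall i, g i = k1 * c1 i + k2 * c2 i + k3 * c3 i + k4 * c4 i) -> lc g v = 0.
Proof. by move=> h1 h2 h3 h4 h; rewrite (lc_ext _ h) -!lcD -!lcZ h1 h2 h3 h4 !scaler0 !addr0. Qed.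
End LC2.
Ltac lc_case := move=> -[[|[|[|[|[|[|[|[|]]]]]]]] ?] //=.
Ltac lcH H := move/eqP: H; rewrite ?(add0r, addr0, lcD, lcB, lcN, lcZ, lcMn) -subr_eq0 ?subr0 ?lcB => /eqP H.
Ltac lcG := apply/eqP; rewrite ?(add0r, addr0, lcD, lcB, lcN, lcZ, lcMn) -subr_eq0 ?subr0 ?lcB; apply/eqP.
Ltac lc_fin := lc_case; field; rewrite ?pnatr_eq0 //.
Ltac at1 a := let w := fresh "w" in pose w := (fun i : 'I_1 => nth 0 [:: a] i);
  rewrite -[a]/(w (ix 1 0)) !(lc_atom w).
Ltac at2 a b := let w := fresh "w" in pose w := (fun i : 'I_2 => nth 0 [:: a; b] i);
  rewrite -[a]/(w (ix 2 0)) -[b]/(w (ix 2 1)) !(lc_atom w).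
Ltac at3 a b c := let w := fresh "w" in pose w := (fun i : 'I_3 => nth 0 [:: a; b; c] i);
  rewrite -[a]/(w (ix 3 0)) -[b]/(w (ix 3 1)) -[c]/(w (ix 3 2)) !(lc_atom w).
Ltac at4 a b c d := let w := fresh "w" in pose w := (fun i : 'I_4 => nth 0 [:: a; b; c; d] i);
  rewrite -[a]/(w (ix 4 0)) -[b]/(w (ix 4 1)) -[c]/(w (ix 4 2)) -[d]/(w (ix 4 3)) !(lc_atom w).
Ltac at5 a b c d f := let w := fresh "w" in pose w := (fun i : 'I_5 => nth 0 [:: a; b; c; d; f] i);
  rewrite -[a]/(w (ix 5 0)) -[b]/(w (ix 5 1)) -[c]/(w (ix 5 2)) -[d]/(w (ix 5 3)) -[f]/(w (ix 5 4)) !(lc_atom w).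
Ltac at6 a b c d f g := let w := fresh "w" in pose w := (fun i : 'I_6 => nth 0 [:: a; b; c; d; f; g] i);
  rewrite -[a]/(w (ix 6 0)) -[b]/(w (ix 6 1)) -[c]/(w (ix 6 2)) -[d]/(w (ix 6 3)) -[f]/(w (ix 6 4)) -[g]/(w (ix 6 5)) !(lc_atom w).
Ltac at7 a b c d f g h := let w := fresh "w" in pose w := (fun i : 'I_7 => nth 0 [:: a; b; c; d; f; g; h] i);
  rewrite -[a]/(w (ix 7 0)) -[b]/(w (ix 7 1)) -[c]/(w (ix 7 2)) -[d]/(w (ix 7 3)) -[f]/(w (ix 7 4)) -[g]/(w (ix 7 5)) -[h]/(w (ix 7 6)) !(lc_atom w).
Ltac at8 a b c d f g h k := let w := fresh "w" in pose w := (fun i : 'I_8 => nth 0 [:: a; b; c; d; f; g; h; k] i);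
  rewrite -[a]/(w (ix 8 0)) -[b]/(w (ix 8 1)) -[c]/(w (ix 8 2)) -[d]/(w (ix 8 3)) -[f]/(w (ix 8 4)) -[g]/(w (ix 8 5)) -[h]/(w (ix 8 6)) -[k]/(w (ix 8 7)) !(lc_atom w).
Section Alg.
Variables (R : realType) (E : completeNormedModType R[i]) (tp : E -> E -> E -> E).
Hypothesis Hlin : forall a a' b c (k : R[i]), tp (k *: a + a') b c = k *: tp a b c + tp a' b c.
Hypothesis Hsym : forall a b c, tp a b c = tp c b a.
Hypothesis Hmid : forall a b b' c (k : R[i]), tp a (k *: b + b') c = (k^*)%C *: tp a b c + tp a b' c.
Hypothesis Hjor : forall a b x y z, tp a b (tp x y z) = tp x y (tp a b z) + tp (tp a b x) y z - tp x (tp b a y) z.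
Hypothesis Hnorm : forall a, `|tp a a a| = `|a| ^+ 3.

Lemma mulrn_inj (x y : E) n : x *+ n.+1 = y *+ n.+1 -> x = y.
Proof.
move=> h.
have h2 : (n.+1%:R : R[i]) *: x = n.+1%:R *: y by rewrite !scaler_nat.
have nz : (n.+1%:R : R[i]) != 0 by rewrite pnatr_eq0.
have := congr1 (fun z => (n.+1%:R : R[i])^-1 *: z) h2.
by rewrite /= !scalerA mulVf // !scale1r.
Qed.
Lemma tp0l b c : tp 0 b c = 0.
Proof.
have h := Hlin 0 0 b c 1; rewrite !scale1r !addr0 in h.
by apply: (addrI (tp 0 b c)); rewrite addr0 -h.
Qed.
Lemma tpDl a a' b c : tp (a + a') b c = tp a b c + tp a' b c.
Proof. by have := Hlin a a' b c 1; rewrite !scale1r. Qed.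
Lemma tpZl k a b c : tp (k *: a) b c = k *: tp a b c.
Proof. by have := Hlin a 0 b c k; rewrite !addr0 tp0l addr0. Qed.
Lemma tpNl a b c : tp (- a) b c = - tp a b c.
Proof. by rewrite -scaleN1r tpZl scaleN1r. Qed.
Lemma tpBl a a' b c : tp (a - a') b c = tp a b c - tp a' b c.
Proof. by rewrite tpDl tpNl. Qed.
Lemma tp0r a b : tp a b 0 = 0.
Proof. by rewrite Hsym tp0l. Qed.
Lemma tpDr a b c c' : tp a b (c + c') = tp a b c + tp a b c'.
Proof. by rewrite Hsym tpDl !(Hsym _ b a). Qed.
Lemma tpZr k a b c : tp a b (k *: c) = k *: tp a b c.
Proof. by rewrite Hsym tpZl Hsym. Qed.
Lemma tpNr a b c : tp a b (- c) = - tp a b c.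
Proof. by rewrite Hsym tpNl Hsym. Qed.
Lemma tpBr a b c c' : tp a b (c - c') = tp a b c - tp a b c'.
Proof. by rewrite tpDr tpNr. Qed.
Lemma tp0m a c : tp a 0 c = 0.
Proof.
have h := Hmid a 0 0 c 1; rewrite conjc1 !scale1r !addr0 in h.
by apply: (addrI (tp a 0 c)); rewrite addr0 -h.
Qed.
Lemma tpDm a b b' c : tp a (b + b') c = tp a b c + tp a b' c.
Proof. by have := Hmid a b b' c 1; rewrite !scale1r conjc1 scale1r. Qed.
Lemma tpZm k a b c : tp a (k *: b) c = (k^*)%C *: tp a b c.
Proof. by have := Hmid a b 0 c k; rewrite !addr0 tp0m addr0. Qed.
Lemma tpNm a b c : tp a (- b) c = - tp a b c.
Proof. by rewrite -scaleN1r tpZm rmorphN1 scaleN1r. Qed.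
Lemma tpBm a b b' c : tp a (b - b') c = tp a b c - tp a b' c.
Proof. by rewrite tpDm tpNm. Qed.

Lemma tp_suml I (r : seq I) (P : pred I) (F : I -> E) b c :
  tp (\sum_(i <- r | P i) F i) b c = \sum_(i <- r | P i) tp (F i) b c.
Proof. exact: (big_morph (fun x => tp x b c) (fun x y => tpDl x y b c) (tp0l b c)). Qed.
Lemma tp_summ I (r : seq I) (P : pred I) (F : I -> E) a c :
  tp a (\sum_(i <- r | P i) F i) c = \sum_(i <- r | P i) tp a (F i) c.
Proof. exact: (big_morph (fun x => tp a x c) (fun x y => tpDm a x y c) (tp0m a c)). Qed.
Lemma tp_sumr I (r : seq I) (P : pred I) (F : I -> E) a b :
  tp a b (\sum_(i <- r | P i) F i) = \sum_(i <- r | P i) tp a b (F i).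
Proof. exact: (big_morph (fun x => tp a b x) (fun x y => tpDr a b x y) (tp0r a b)). Qed.

Lemma orth_sym e f : (forall x, tp e f x = 0) -> forall x, tp f e x = 0.
Proof.
move=> h y; set w := tp f e y.
have h2 : forall x z, tp x w z = 0.
  move=> x z; have := Hjor e f x y z; rewrite !h tp0l tp0r !add0r.
  by move/esym/eqP; rewrite oppr_eq0 => /eqP.
have := Hnorm w; rewrite h2 normr0 => /esym/eqP.
by rewrite expf_eq0 /= normr_eq0 => /eqP.
Qed.
Section Trip.
Variable e : E.
Hypothesis He : tp e e e = e.

Lemma LQ v : tp e e (tp e v e) = tp e v e.
Proof.
have J1 := Hjor e v e e e; rewrite He (Hsym (tp e v e) e e) (Hsym v e e) in J1.
have J2 := Hjor e e e v e; rewrite He in J2.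
pose w : 'I_3 -> E := fun i => nth 0 [:: tp e e (tp e v e); tp e v e; tp e (tp e e v) e] i.
rewrite -[tp e e (tp e v e)]/(w (ix 3 0)) -[tp e (tp e e v) e]/(w (ix 3 2)) -[tp e v e]/(w (ix 3 1)) in J1 J2 *.
rewrite !(lc_atom w) in J1 J2 *.
move/eqP: J1; rewrite !(lcD, lcB) -subr_eq0 lcB => /eqP J1.
move/eqP: J2; rewrite !(lcD, lcB) -subr_eq0 lcB => /eqP J2.
apply/eqP; rewrite -subr_eq0 lcB; apply/eqP.
apply: (lc_comb2 (k1 := - 3%:R^-1) (k2 := 3%:R^-1) J1 J2); lc_case; field; rewrite ?pnatr_eq0 //.
Qed.

Lemma QL v : tp e (tp e e v) e = tp e v e.
Proof.
have J2 := Hjor e e e v e; rewrite He LQ in J2.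
pose w : 'I_2 -> E := fun i => nth 0 [:: tp e (tp e e v) e; tp e v e] i.
rewrite -[tp e (tp e e v) e]/(w (ix 2 0)) -[tp e v e]/(w (ix 2 1)) in J2 *.
rewrite !(lc_atom w) in J2 *; lcH J2; lcG.
by apply: (lc_comb1 (k1 := 1) J2); lc_fin.
Qed.

Lemma LL v : tp e e (tp e e v) + tp e e (tp e e v) = tp e e v + tp e (tp e v e) e.
Proof.
have J3 := Hjor v e e e e; rewrite He (Hsym v e e) (Hsym (tp e e v) e e) in J3.
pose w : 'I_3 -> E := fun i => nth 0 [:: tp e e (tp e e v); tp e (tp e v e) e; tp e e v] i.
rewrite -[tp e e (tp e e v)]/(w (ix 3 0)) -[tp e (tp e v e) e]/(w (ix 3 1)) -[tp e e v]/(w (ix 3 2)) in J3 *.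
rewrite !(lc_atom w) in J3 *; lcH J3; lcG.
by apply: (lc_comb1 (k1 := -1) J3); lc_fin.
Qed.

Lemma QQQ v : tp e (tp e (tp e v e) e) e = tp e v e.
Proof.
by have := LL (tp e v e); rewrite !LQ => /addrI.
Qed.

Section Eig.
Variables (w : E) (c : R[i]).
Hypothesis Hw : tp e e w = c *: w.
Lemma QQ_eig : tp e (tp e w e) e = (2%:R * c ^+ 2 - c) *: w.
Proof.
have := LL w; rewrite !Hw !tpZr Hw; at2 (tp e (tp e w e) e) w => h; lcH h; lcG.
by apply: (lc_comb1 (k1 := -1) h); lc_fin.
Qed.
Lemma poly_eig : (c * (2%:R * c - 1) * (c - 1)) *: w = 0.
Proof.
have := LQ (tp e w e); rewrite QQ_eig tpZr Hw; at1 w => h; lcH h; lcG.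
by apply: (lc_comb1 (k1 := 1) h); lc_fin.
Qed.
Lemma eig0 : c * (2%:R * c - 1) * (c - 1) != 0 -> w = 0.
Proof. by move=> nz; have /eqP := poly_eig; rewrite scaler_eq0 (negbTE nz) => /eqP. Qed.
Lemma P0_eig : P0 tp e w = (1 - 3%:R * c + 2%:R * c ^+ 2) *: w.
Proof.
rewrite /P0 /Qop /Lop QQ_eig Hw; at1 w; lcG.
by apply: lc0; lc_case; ring.
Qed.
Lemma P1_eig : P1 tp e w = (4%:R * c - 4%:R * c ^+ 2) *: w.
Proof.
rewrite /P1 /Qop /Lop QQ_eig Hw; at1 w; lcG.
by apply: lc0; lc_case; ring.
Qed.
Lemma P2_eig : P2 tp e w = (2%:R * c ^+ 2 - c) *: w.
Proof. exact: QQ_eig. Qed.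
End Eig.

Lemma P2_Peirce x : Peirce tp 2 e (P2 tp e x).
Proof. by rewrite /Peirce /P2 /Qop LQ divff ?pnatr_eq0 // scale1r. Qed.
Lemma P0_Peirce x : Peirce tp 0 e (P0 tp e x).
Proof.
rewrite /Peirce /P0 /Qop /Lop mul0r scale0r tpDr tpBr tpZr LQ.
pose w : 'I_3 -> E := fun i => nth 0 [:: tp e e (tp e e x); tp e (tp e x e) e; tp e e x] i.
have h := LL x.
rewrite -[tp e e (tp e e x)]/(w (ix 3 0)) -[tp e (tp e x e) e]/(w (ix 3 1)) -[tp e e x]/(w (ix 3 2)) in h *.
rewrite !(lc_atom w) in h *; lcH h; lcG.
by apply: (lc_comb1 (k1 := -1) h); lc_fin.
Qed.
Lemma P1_Peirce x : Peirce tp 1 e (P1 tp e x).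
Proof.
rewrite /Peirce /P1 /Qop /Lop tpZr tpBr LQ scalerA.
pose w : 'I_3 -> E := fun i => nth 0 [:: tp e e (tp e e x); tp e (tp e x e) e; tp e e x] i.
have h := LL x.
rewrite -[tp e e (tp e e x)]/(w (ix 3 0)) -[tp e (tp e x e) e]/(w (ix 3 1)) -[tp e e x]/(w (ix 3 2)) in h *.
rewrite !(lc_atom w) in h *; lcH h; lcG.
by apply: (lc_comb1 (k1 := 1) h); lc_fin.
Qed.
Lemma P_sum x : P0 tp e x + P1 tp e x + P2 tp e x = x.
Proof.
rewrite /P0 /P1 /P2 /Qop /Lop.
pose w : 'I_3 -> E := fun i => nth 0 [:: tp e (tp e x e) e; tp e e x; x] i.
rewrite -[tp e (tp e x e) e]/(w (ix 3 0)) -[tp e e x]/(w (ix 3 1)) -[x]/(w (ix 3 2)).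
rewrite !(lc_atom w); lcG.
by apply: lc0; lc_case; ring.
Qed.
End Trip.
Lemma conj_half (j : nat) : ((j%:R / 2%:R : R[i])^*)%C = j%:R / 2%:R.
Proof. by rewrite rmorphM fmorphV !rmorph_nat. Qed.

Section Peirce.
Variable e : E.
Hypothesis He : tp e e e = e.

Lemma Peirce_tp i j k x y z : Peirce tp i e x -> Peirce tp j e y -> Peirce tp k e z ->
  tp e e (tp x y z) = (((i + k)%:R - j%:R) / 2%:R) *: tp x y z.
Proof.
rewrite /Peirce => hx hy hz.
have := Hjor e e x y z; rewrite hz tpZr hx tpZl hy tpZm conj_half.
at2 (tp e e (tp x y z)) (tp x y z) => h; lcH h; lcG.
by apply: (lc_comb1 (k1 := 1) h); lc_case; rewrite natrD; field; rewrite ?pnatr_eq0.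
Qed.

Lemma Peirce_out i j k x y z : Peirce tp i e x -> Peirce tp j e y -> Peirce tp k e z ->
  (i + k < j)%N \/ (2 < i + k - j)%N -> tp x y z = 0.
Proof.
move=> hx hy hz hc; apply: (eig0 He (Peirce_tp hx hy hz)).
set c := _ / _.
have -> : c * (2%:R * c - 1) * (c - 1) =
   ((i+k)%:R - j%:R) * ((i+k)%:R - (j+1)%:R) * ((i+k)%:R - (j+2)%:R) / 4%:R.
  by rewrite /c !natrD; field; rewrite ?pnatr_eq0.
rewrite !mulf_neq0 ?invr_eq0 ?pnatr_eq0 // subr_eq0 eqr_nat; apply/negP => /eqP; lia.
Qed.

Lemma Peirce_in i j k x y z : Peirce tp i e x -> Peirce tp j e y -> Peirce tp k e z ->
  (j <= i + k)%N -> Peirce tp (i + k - j) e (tp x y z).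
Proof. by move=> hx hy hz hj; rewrite /Peirce (Peirce_tp hx hy hz) natrB. Qed.

Lemma P0_on i x : (i <= 2)%N -> Peirce tp i e x -> P0 tp e x = (i == 0)%:R *: x.
Proof.
move=> hi hx; rewrite (P0_eig He hx); at1 x; lcG; apply: lc0.
by case: i hi {hx} => [|[|[|]]] // _; lc_case; field; rewrite ?pnatr_eq0.
Qed.
Lemma P1_on i x : (i <= 2)%N -> Peirce tp i e x -> P1 tp e x = (i == 1)%:R *: x.
Proof.
move=> hi hx; rewrite (P1_eig He hx); at1 x; lcG; apply: lc0.
by case: i hi {hx} => [|[|[|]]] // _; lc_case; field; rewrite ?pnatr_eq0.
Qed.
Lemma P2_on i x : (i <= 2)%N -> Peirce tp i e x -> P2 tp e x = (i == 2)%:R *: x.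
Proof.
move=> hi hx; rewrite (P2_eig He hx); at1 x; lcG; apply: lc0.
by case: i hi {hx} => [|[|[|]]] // _; lc_case; field; rewrite ?pnatr_eq0.
Qed.
End Peirce.
Section AB.
Variable e : E.
Hypothesis He : tp e e e = e.

Lemma P1D x y : P1 tp e (x + y) = P1 tp e x + P1 tp e y.
Proof.
rewrite /P1 /Qop /Lop !tpDm tpDr.
at4 (tp e (tp e x e) e) (tp e (tp e y e) e) (tp e e x) (tp e e y); lcG.
by apply: lc0; lc_case; ring.
Qed.
Lemma P0D x y : P0 tp e (x + y) = P0 tp e x + P0 tp e y.
Proof.
rewrite /P0 /Qop /Lop !tpDm tpDr.
at6 (tp e (tp e x e) e) (tp e (tp e y e) e) (tp e e x) (tp e e y) x y; lcG.
by apply: lc0; lc_case; ring.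
Qed.
Lemma P2D x y : P2 tp e (x + y) = P2 tp e x + P2 tp e y.
Proof. by rewrite /P2 /Qop !tpDm. Qed.

Lemma GP1 i j k x y z : (i <= 2)%N -> (j <= 2)%N -> (k <= 2)%N ->
  Peirce tp i e x -> Peirce tp j e y -> Peirce tp k e z ->
  P1 tp e (tp x y z) = ((j <= i + k) && (i + k - j == 1))%N%:R *: tp x y z.
Proof.
move=> hi hj hk hx hy hz.
have [hin|hout] := boolP ((j <= i + k) && (i + k - j <= 2))%N.
  case/andP: hin => h1 h2; rewrite h1 /=.
  by rewrite (P1_on He h2 (Peirce_in hx hy hz h1)).
rewrite (Peirce_out He hx hy hz) ?scaler0 //; last first.
  by move: hout; rewrite negb_and -!ltnNge => /orP.
by rewrite /P1 /Qop /Lop !tp0m !tp0r subrr scaler0.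
Qed.
Lemma GP0 i j k x y z : (i <= 2)%N -> (j <= 2)%N -> (k <= 2)%N ->
  Peirce tp i e x -> Peirce tp j e y -> Peirce tp k e z ->
  P0 tp e (tp x y z) = ((j <= i + k) && (i + k - j == 0))%N%:R *: tp x y z.
Proof.
move=> hi hj hk hx hy hz.
have [hin|hout] := boolP ((j <= i + k) && (i + k - j <= 2))%N.
  case/andP: hin => h1 h2; rewrite h1 /=.
  by rewrite (P0_on He h2 (Peirce_in hx hy hz h1)).
rewrite (Peirce_out He hx hy hz) ?scaler0 //; last first.
  by move: hout; rewrite negb_and -!ltnNge => /orP.
by rewrite /P0 /Qop /Lop !tp0m !tp0r scaler0 subrr addr0.
Qed.
Lemma GP2 i j k x y z : (i <= 2)%N -> (j <= 2)%N -> (k <= 2)%N ->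
  Peirce tp i e x -> Peirce tp j e y -> Peirce tp k e z ->
  P2 tp e (tp x y z) = ((j <= i + k) && (i + k - j == 2))%N%:R *: tp x y z.
Proof.
move=> hi hj hk hx hy hz.
have [hin|hout] := boolP ((j <= i + k) && (i + k - j <= 2))%N.
  case/andP: hin => h1 h2; rewrite h1 /=.
  by rewrite (P2_on He h2 (Peirce_in hx hy hz h1)).
rewrite (Peirce_out He hx hy hz) ?scaler0 //; last first.
  by move: hout; rewrite negb_and -!ltnNge => /orP.
by rewrite /P2 /Qop !tp0m.
Qed.
End AB.
Section ABT.
Variable e : E.
Hypothesis He : tp e e e = e.

Lemma K1 w y z : Peirce02 tp e y -> Peirce02 tp e z -> P1 tp e (tp w y z) = tp (P1 tp e w) y z.
Proof.
case=> y0 [y2 [hy0 hy2 ->]]; case=> z0 [z2 [hz0 hz2 ->]].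
have hw := P_sum e w.
have h0 := P0_Peirce He w; have h1 := P1_Peirce He w; have h2 := P2_Peirce He w.
move: h0 h1 h2 hw.
set w0 := P0 tp e w; set w1 := P1 tp e w; set w2 := P2 tp e w => h0 h1 h2 hw; clearbody w0 w1 w2.
rewrite -{1}hw !tpDl !tpDm !tpDr !P1D.

rewrite (GP1 He _ _ _ h0 hy0 hz0) // (GP1 He _ _ _ h0 hy0 hz2) // (GP1 He _ _ _ h0 hy2 hz0) // (GP1 He _ _ _ h0 hy2 hz2) // (GP1 He _ _ _ h1 hy0 hz0) // (GP1 He _ _ _ h1 hy0 hz2) // (GP1 He _ _ _ h1 hy2 hz0) // (GP1 He _ _ _ h1 hy2 hz2) // (GP1 He _ _ _ h2 hy0 hz0) // (GP1 He _ _ _ h2 hy0 hz2) // (GP1 He _ _ _ h2 hy2 hz0) // (GP1 He _ _ _ h2 hy2 hz2) // /=.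
rewrite !mulr0n !mulr1n !scale0r !scale1r.
rewrite (Peirce_out He h1 hy0 hz2); last by right.
rewrite (Peirce_out He h1 hy2 hz0); last by left.
at2 (tp w1 y0 z0) (tp w1 y2 z2); lcG.
by apply: lc0; lc_case; ring.
Qed.

Lemma K2 x w z : Peirce02 tp e x -> Peirce02 tp e z -> P1 tp e (tp x w z) = tp x (P1 tp e w) z.
Proof.
case=> x0 [x2 [hx0 hx2 ->]]; case=> z0 [z2 [hz0 hz2 ->]].
have hw := P_sum e w.
have h0 := P0_Peirce He w; have h1 := P1_Peirce He w; have h2 := P2_Peirce He w.
move: h0 h1 h2 hw.
set w0 := P0 tp e w; set w1 := P1 tp e w; set w2 := P2 tp e w => h0 h1 h2 hw; clearbody w0 w1 w2.
rewrite -{1}hw !tpDl !tpDm !tpDr !P1D.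

rewrite (GP1 He _ _ _ hx0 h0 hz0) // (GP1 He _ _ _ hx0 h0 hz2) // (GP1 He _ _ _ hx0 h1 hz0) // (GP1 He _ _ _ hx0 h1 hz2) // (GP1 He _ _ _ hx0 h2 hz0) // (GP1 He _ _ _ hx0 h2 hz2) // (GP1 He _ _ _ hx2 h0 hz0) // (GP1 He _ _ _ hx2 h0 hz2) // (GP1 He _ _ _ hx2 h1 hz0) // (GP1 He _ _ _ hx2 h1 hz2) // (GP1 He _ _ _ hx2 h2 hz0) // (GP1 He _ _ _ hx2 h2 hz2) // /=.
rewrite !mulr0n !mulr1n !scale0r !scale1r.
rewrite (Peirce_out He hx0 h1 hz0); last by left.
rewrite (Peirce_out He hx2 h1 hz2); last by right.
at2 (tp x0 w1 z2) (tp x2 w1 z0); lcG.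
by apply: lc0; lc_case; ring.
Qed.

Lemma K3 x y w : Peirce02 tp e x -> Peirce02 tp e y -> P1 tp e (tp x y w) = tp x y (P1 tp e w).
Proof. by move=> hx hy; rewrite !(Hsym x y) K1. Qed.

Lemma Dform x : P0 tp e x + P2 tp e x = x - P1 tp e x.
Proof.
have := P_sum e x; at4 (P0 tp e x) (P1 tp e x) (P2 tp e x) x => h; lcH h; lcG.
by apply: (lc_comb1 (k1 := 1) h); lc_fin.
Qed.
End ABT.
Lemma Peirce0_eq e x : Peirce tp 0 e x -> tp e e x = 0.
Proof. by rewrite /Peirce mul0r scale0r. Qed.
Lemma Peirce02_of2 e x : Peirce tp 2 e x -> Peirce02 tp e x.
Proof. by move=> hx; exists 0, x; split; rewrite ?add0r // /Peirce tp0r scaler0. Qed.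

Variable T : {linear E -> E}.

Section Der.
Variable e : E.
Hypothesis He : tp e e e = e.

Lemma a_to_b : triple_derivation tp T ->
  triple_derivation_on tp (Peirce02 tp e) (fun x => P0 tp e (T x) + P2 tp e (T x)).
Proof.
move=> HT; split.
  by move=> x _; exists (P0 tp e (T x)), (P2 tp e (T x)); split => //;
    [exact: P0_Peirce | exact: P2_Peirce].
move=> a b c ha hb hc; rewrite !Dform // HT !P1D (K1 He _ hb hc) (K2 He _ ha hc) (K3 He _ ha hb).
rewrite tpBl tpBm tpBr.
at6 (tp (T a) b c) (tp a (T b) c) (tp a b (T c)) (tp (P1 tp e (T a)) b c)
    (tp a (P1 tp e (T b)) c) (tp a b (P1 tp e (T c))); lcG.
by apply: lc0; lc_case; ring.
Qed.

Lemma b_to_c :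
  triple_derivation_on tp (Peirce02 tp e) (fun x => P0 tp e (T x) + P2 tp e (T x)) ->
  triple_derivation_on tp (Peirce tp 2 e) (fun x => P2 tp e (T x)) /\ P0 tp e (T e) = 0.
Proof.
move=> [_ Hb]; split; first split.
- by move=> x _; exact: P2_Peirce.
- move=> a b c ha hb hc.
  have h0 := P0_Peirce He; have h2 := P2_Peirce He.
  move: (Hb a b c (Peirce02_of2 ha) (Peirce02_of2 hb) (Peirce02_of2 hc))
    (h0 (T a)) (h2 (T a)) (h0 (T b)) (h2 (T b)) (h0 (T c)) (h2 (T c))
    (h0 (T (tp a b c))) (h2 (T (tp a b c))).
  move: (P0 tp e (T a)) (P2 tp e (T a)) (P0 tp e (T b)) (P2 tp e (T b))
    (P0 tp e (T c)) (P2 tp e (T c)) (P0 tp e (T (tp a b c))) (P2 tp e (T (tp a b c)))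
    => A0 A2 B0 B2 C0 C2 X0 X2 h hA0 hA2 hB0 hB2 hC0 hC2 hX0 hX2.
  move/(congr1 (P2 tp e)): h; rewrite !tpDl !tpDm !tpDr !P2D.
  rewrite (P2_on He _ hX0) // (P2_on He _ hX2) //.
  rewrite (GP2 He _ _ _ hA0 hb hc) // (GP2 He _ _ _ hA2 hb hc) //.
  rewrite (GP2 He _ _ _ ha hB0 hc) // (GP2 He _ _ _ ha hB2 hc) //.
  rewrite (GP2 He _ _ _ ha hb hC0) // (GP2 He _ _ _ ha hb hC2) //=.
  rewrite ?mulr0n ?mulr1n ?scale0r ?scale1r ?add0r ?addr0 => ->.
  by [].
- have he2 : Peirce tp 2 e e by rewrite /Peirce divff ?pnatr_eq0 // scale1r.
  have h0 := P0_Peirce He; have h2 := P2_Peirce He.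
  move: (Hb e e e (Peirce02_of2 he2) (Peirce02_of2 he2) (Peirce02_of2 he2))
    (h0 (T e)) (h2 (T e)).
  rewrite He.
  move: (P0 tp e (T e)) (P2 tp e (T e)) => A0 A2 h hA0 hA2.
  move/(congr1 (P0 tp e)): h; rewrite !tpDl !tpDm !tpDr !P0D.
  rewrite (P0_on He _ hA0) // (P0_on He _ hA2) //.
  rewrite (GP0 He _ _ _ hA0 he2 he2) // (GP0 He _ _ _ hA2 he2 he2) //.
  rewrite (GP0 He _ _ _ he2 hA0 he2) // (GP0 He _ _ _ he2 hA2 he2) //.
  rewrite (GP0 He _ _ _ he2 he2 hA0) // (GP0 He _ _ _ he2 he2 hA2) //=.
  rewrite ?mulr0n ?mulr1n ?scale0r ?scale1r ?add0r ?addr0 => ->.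
  by rewrite (Hsym A0 e e) (Peirce0_eq hA0) addr0.
Qed.
End Der.
Lemma TD x y : T (x + y) = T x + T y. Proof. exact: linearD. Qed.
Lemma TZ (k : R[i]) x : T (k *: x) = k *: T x. Proof. exact: linearZ. Qed.
Definition dlt a b c := T (tp a b c) - tp (T a) b c - tp a (T b) c - tp a b (T c).

Lemma dltDl a a' b c : dlt (a + a') b c = dlt a b c + dlt a' b c.
Proof.
rewrite /dlt !TD !tpDl !TD.
at8 (T (tp a b c)) (T (tp a' b c)) (tp (T a) b c) (tp (T a') b c) (tp a (T b) c)
  (tp a' (T b) c) (tp a b (T c)) (tp a' b (T c)); lcG.
by apply: lc0; lc_case; ring.
Qed.
Lemma dltZl k a b c : dlt (k *: a) b c = k *: dlt a b c.
Proof.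
rewrite /dlt !TZ !tpZl !TZ /=.
at4 (T (tp a b c)) (tp (T a) b c) (tp a (T b) c) (tp a b (T c)); lcG.
by apply: lc0; lc_case; ring.
Qed.
Lemma dltDm a b b' c : dlt a (b + b') c = dlt a b c + dlt a b' c.
Proof.
rewrite /dlt !TD !tpDm !TD.
at8 (T (tp a b c)) (T (tp a b' c)) (tp (T a) b c) (tp (T a) b' c) (tp a (T b) c)
  (tp a (T b') c) (tp a b (T c)) (tp a b' (T c)); lcG.
by apply: lc0; lc_case; ring.
Qed.
Lemma dltZm k a b c : dlt a (k *: b) c = (k^*)%C *: dlt a b c.
Proof.
rewrite /dlt !TZ !tpZm /= !TZ /=.
at4 (T (tp a b c)) (tp (T a) b c) (tp a (T b) c) (tp a b (T c)); lcG.
by apply: lc0; lc_case; ring.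
Qed.
Lemma dlt_sym a b c : dlt a b c = dlt c b a.
Proof.
rewrite /dlt (Hsym a b c) (Hsym (T a) b c) (Hsym a (T b) c) (Hsym a b (T c)).
at4 (T (tp c b a)) (tp c b (T a)) (tp c (T b) a) (tp (T c) b a); lcG.
by apply: lc0; lc_case; ring.
Qed.
Lemma dltDr a b c c' : dlt a b (c + c') = dlt a b c + dlt a b c'.
Proof. by rewrite dlt_sym dltDl !(dlt_sym _ b a). Qed.
Lemma dltZr k a b c : dlt a b (k *: c) = k *: dlt a b c.
Proof. by rewrite dlt_sym dltZl dlt_sym. Qed.
Lemma dlt0l b c : dlt 0 b c = 0.
Proof. by have := dltZl 0 0 b c; rewrite !scale0r. Qed.
Lemma dlt0m a c : dlt a 0 c = 0.
Proof. by have := dltZm 0 a 0 c; rewrite scale0r rmorph0 scale0r. Qed.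
Lemma dlt0r a b : dlt a b 0 = 0.
Proof. by rewrite dlt_sym dlt0l. Qed.

Lemma dexp a b (m : R[i]) :
  dlt (a + m *: b) (a + m *: b) (a + m *: b) =
  dlt a a a + m *: (dlt a a b *+ 2) + (m^*)%C *: dlt a b a
  + (m * (m^*)%C) *: (dlt a b b *+ 2) + (m ^+ 2) *: dlt b a b
  + (m * (m^*)%C * m) *: dlt b b b.
Proof.
rewrite !dltDl !dltDm !dltDr !dltZl !dltZm !dltZr (dlt_sym b a a) (dlt_sym b b a).
at6 (dlt a a a) (dlt a a b) (dlt a b a) (dlt a b b) (dlt b a b) (dlt b b b); lcG.
by apply: lc0; lc_case; ring.
Qed.
Lemma c_trip u : tp u u u = u ->
  triple_derivation_on tp (Peirce tp 2 u) (fun x => P2 tp u (T x)) /\ P0 tp u (T u) = 0 ->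
  dlt u u u = 0.
Proof.
move=> Hu [[_ HD] H0].
have hu2 : Peirce tp 2 u u by rewrite /Peirce divff ?pnatr_eq0 // scale1r.
have h1 := HD u u u hu2 hu2 hu2; rewrite Hu /P2 /Qop in h1.
rewrite (Hsym (tp u (tp u (T u) u) u) u u) (LQ Hu) in h1.
move: H0; rewrite /P0 /Qop /Lop => H0.
rewrite /dlt Hu (Hsym (T u) u u) -(QQQ Hu (T u)).
move: h1 H0.
at4 (tp u (tp u (tp u (T u) u) u) u) (tp u (tp u (T u) u) u) (tp u u (T u)) (T u) => h1 H0.
lcH h1; lcH H0; lcG.
by apply: (lc_comb2 (k1 := 1) (k2 := 1) H0 h1); lc_fin.
Qed.

Lemma conj_i : (('i%C : R[i])^*)%C = - 'i%C.
Proof. by apply/eqP; rewrite eq_complex /= oppr0 !eqxx. Qed.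

Lemma trip_sum e f (m : R[i]) : tp e e e = e -> tp f f f = f ->
  (forall x, tp e f x = 0) -> (forall x, tp f e x = 0) ->
  tp (e + m *: f) (e + m *: f) (e + m *: f) = e + (m * (m^*)%C * m) *: f.
Proof.
move=> He Hf hef hfe.
rewrite !tpDl !tpDm !tpDr !tpZl !tpZm !tpZr (Hsym e e f) (Hsym f f e) !hef !hfe He Hf.
rewrite !scaler0 ?addr0 ?add0r.
at2 e f; lcG.
by apply: lc0; lc_case; ring.
Qed.
Lemma i_neq0 : ('i%C : R[i]) != 0.
Proof.
apply/eqP => h; have := sqr_i R; rewrite h expr0n /= => /eqP.
by rewrite eq_sym oppr_eq0 oner_eq0.
Qed.

Lemma conj_mi : ((- 'i%C : R[i])^*)%C = 'i%C.
Proof. by apply/eqP; rewrite eq_complex /= oppr0 opprK !eqxx. Qed.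

Section Pairs.
Hypothesis Hq : forall u, tp u u u = u -> dlt u u u = 0.

Lemma pairL e f : tp e e e = e -> tp f f f = f ->
  (forall x, tp e f x = 0) -> (forall x, tp f e x = 0) ->
  dlt e e f = 0 /\ dlt e f e = 0.
Proof.
move=> He Hf hef hfe.
have key (m : R[i]) : m * (m^*)%C = 1 -> m *: (dlt e e f *+ 2) + (m^*)%C *: dlt e f e
    + (m * (m^*)%C) *: (dlt e f f *+ 2) + m ^+ 2 *: dlt f e f = 0.
  move=> hm; have ht := trip_sum m He Hf hef hfe; rewrite hm mul1r in ht.
  by have := Hq ht; rewrite dexp (Hq He) (Hq Hf) scaler0 addr0 add0r.
have h1 := key 1 ltac:(by rewrite rmorph1 mulr1).
have h2 := key (-1) ltac:(by rewrite rmorphN1 mulrNN mulr1).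
have h3 := key 'i%C ltac:(by rewrite conj_i mulrN -expr2 sqr_i opprK).
have h4 := key (- 'i%C) ltac:(by rewrite conj_mi mulNr -expr2 sqr_i opprK).
rewrite rmorph1 in h1; rewrite rmorphN1 in h2; rewrite conj_i in h3;
  rewrite conj_mi in h4.
move: h1 h2 h3 h4.
at4 (dlt e e f) (dlt e f e) (dlt e f f) (dlt f e f) => h1 h2 h3 h4.
lcH h1; lcH h2; lcH h3; lcH h4.
split; lcG.
  apply: (lc_comb4 (k1 := 8%:R^-1) (k2 := - 8%:R^-1) (k3 := (8%:R * 'i%C)^-1)
    (k4 := - (8%:R * 'i%C)^-1) h1 h2 h3 h4).
  by lc_case; field; rewrite ?pnatr_eq0 ?i_neq0.
apply: (lc_comb4 (k1 := 4%:R^-1) (k2 := - 4%:R^-1) (k3 := - (4%:R * 'i%C)^-1)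
    (k4 := (4%:R * 'i%C)^-1) h1 h2 h3 h4).
by lc_case; field; rewrite ?pnatr_eq0 ?i_neq0.
Qed.

Lemma tripleL e f g : tp e e e = e -> tp f f f = f -> tp g g g = g ->
  (forall x, tp e f x = 0) -> (forall x, tp f e x = 0) ->
  (forall x, tp e g x = 0) -> (forall x, tp g e x = 0) ->
  (forall x, tp f g x = 0) -> (forall x, tp g f x = 0) ->
  dlt e f g = 0.
Proof.
move=> He Hf Hg hef hfe heg hge hfg hgf.
have Hu : tp (e + g) (e + g) (e + g) = e + g.
  by have := trip_sum 1 He Hg heg hge; rewrite rmorph1 !mulr1 !scale1r.
have huf x : tp (e + g) f x = 0 by rewrite tpDl hef hgf addr0.
have hfu x : tp f (e + g) x = 0 by rewrite tpDm hfe hfg addr0.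
have [_ H] := pairL Hu Hf huf hfu.
rewrite dltDl !dltDr (pairL He Hf hef hfe).2 (pairL Hg Hf hgf hfg).2 (dlt_sym g f e) in H.
rewrite add0r addr0 in H.
by apply: (@mulrn_inj _ _ 1); rewrite mulr2n H mul0rn.
Qed.
End Pairs.
Lemma solve_sys (X Y Z W : E) :
  (forall m : R[i], m * (m^*)%C = 1 -> m *: (X *+ 2) + (m^*)%C *: Y
     + (m * (m^*)%C) *: (Z *+ 2) + m ^+ 2 *: W = 0) -> X = 0 /\ Y = 0.
Proof.
move=> key.
have h1 := key 1 ltac:(by rewrite rmorph1 mulr1).
have h2 := key (-1) ltac:(by rewrite rmorphN1 mulrNN mulr1).
have h3 := key 'i%C ltac:(by rewrite conj_i mulrN -expr2 sqr_i opprK).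
have h4 := key (- 'i%C) ltac:(by rewrite conj_mi mulNr -expr2 sqr_i opprK).
rewrite rmorph1 in h1; rewrite rmorphN1 in h2; rewrite conj_i in h3; rewrite conj_mi in h4.
move: h1 h2 h3 h4.
at4 X Y Z W => h1 h2 h3 h4.
lcH h1; lcH h2; lcH h3; lcH h4.
split; lcG.
  apply: (lc_comb4 (k1 := 8%:R^-1) (k2 := - 8%:R^-1) (k3 := (8%:R * 'i%C)^-1)
    (k4 := - (8%:R * 'i%C)^-1) h1 h2 h3 h4).
  by lc_case; field; rewrite ?pnatr_eq0 ?i_neq0.
apply: (lc_comb4 (k1 := 4%:R^-1) (k2 := - 4%:R^-1) (k3 := - (4%:R * 'i%C)^-1)
    (k4 := (4%:R * 'i%C)^-1) h1 h2 h3 h4).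
by lc_case; field; rewrite ?pnatr_eq0 ?i_neq0.
Qed.

Lemma polar (Hz : forall x, dlt x x x = 0) a b c : dlt a b c = 0.
Proof.
have Hm a' b' : dlt a' b' a' = 0.
  apply: (proj2 (@solve_sys (dlt a' a' b') (dlt a' b' a') (dlt a' b' b') (dlt b' a' b') _)).
  by move=> m _; have := Hz (a' + m *: b'); rewrite dexp !Hz scaler0 addr0 add0r.
have := Hm (a + c) b; rewrite dltDl !dltDr !Hm add0r addr0 (dlt_sym c b a) => H.
by apply: (@mulrn_inj _ _ 1); rewrite mulr2n H mul0rn.
Qed.

Lemma dlt_suml I (r : seq I) (P : pred I) (F : I -> E) b c :
  dlt (\sum_(i <- r | P i) F i) b c = \sum_(i <- r | P i) dlt (F i) b c.
Proof. exact: (big_morph (fun x => dlt x b c) (fun x y => dltDl x y b c) (dlt0l b c)). Qed.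
Lemma dlt_summ I (r : seq I) (P : pred I) (F : I -> E) a c :
  dlt a (\sum_(i <- r | P i) F i) c = \sum_(i <- r | P i) dlt a (F i) c.
Proof. exact: (big_morph (fun x => dlt a x c) (fun x y => dltDm a x y c) (dlt0m a c)). Qed.
Lemma dlt_sumr I (r : seq I) (P : pred I) (F : I -> E) a b :
  dlt a b (\sum_(i <- r | P i) F i) = \sum_(i <- r | P i) dlt a b (F i).
Proof. exact: (big_morph (fun x => dlt a b x) (fun x y => dltDr a b x y) (dlt0r a b)). Qed.

Section Fam.
Hypothesis Hq : forall u, tp u u u = u -> dlt u u u = 0.
Variable s : seq (R[i] * E).
Hypothesis Htrip : forall i, (i < size s)%N -> tripotent tp (nth (0, 0) s i).2.
Hypothesis Horth : forall i j, (i < j)%N -> (j < size s)%N ->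
  Defs.orthogonal tp (nth (0, 0) s i).2 (nth (0, 0) s j).2.

Let ee i := (nth (0, 0) s i).2.

Lemma orth' i j : (i < size s)%N -> (j < size s)%N -> i != j -> forall x, tp (ee i) (ee j) x = 0.
Proof.
move=> hi hj hij; case: (ltngtP i j) hij => [hlt|hgt|->] //= _.
  exact: Horth.
by apply: orth_sym; apply: Horth.
Qed.

Lemma fam_all i j k : (i < size s)%N -> (j < size s)%N -> (k < size s)%N ->
  dlt (ee i) (ee j) (ee k) = 0.
Proof.
move=> hi hj hk.
have Ti := Htrip hi; have Tj := Htrip hj; have Tk := Htrip hk.
have [eij|nij] := eqVneq i j.
  subst j; have [eik|nik] := eqVneq i k; first by subst k; exact: Hq.
  have nki : k != i by rewrite eq_sym.
  exact: (pairL Hq Ti Tk (orth' hi hk nik) (orth' hk hi nki)).1.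
have [eik|nik] := eqVneq i k.
  subst k; have nji : j != i by rewrite eq_sym.
  exact: (pairL Hq Ti Tj (orth' hi hj nij) (orth' hj hi nji)).2.
have [ejk|njk] := eqVneq j k.
  subst k; rewrite dlt_sym; have nji : j != i by rewrite eq_sym.
  exact: (pairL Hq Tj Ti (orth' hj hi nji) (orth' hi hj nij)).1.
apply: (tripleL Hq Ti Tj Tk); apply: orth' => //; by rewrite eq_sym.
Qed.

Lemma fam_zero : let a := \sum_(p <- s) p.1 *: p.2 in dlt a a a = 0.
Proof.
rewrite /= (big_nth (0, 0)).
have Hk i j : (i < size s)%N -> (j < size s)%N ->
    dlt (ee i) (ee j) (\sum_(0 <= k < size s) (nth (0, 0) s k).1 *: (nth (0, 0) s k).2) = 0.
  move=> hi hj; rewrite dlt_sumr; apply: big1_seq => k /andP[_]; rewrite mem_index_iota => /andP[_ hk].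
  by rewrite dltZr fam_all ?scaler0.
have Hj i : (i < size s)%N ->
    dlt (ee i) (\sum_(0 <= k < size s) (nth (0, 0) s k).1 *: (nth (0, 0) s k).2)
      (\sum_(0 <= k < size s) (nth (0, 0) s k).1 *: (nth (0, 0) s k).2) = 0.
  move=> hi; rewrite dlt_summ; apply: big1_seq => j /andP[_]; rewrite mem_index_iota => /andP[_ hj].
  by rewrite dltZm Hk ?scaler0.
rewrite dlt_suml; apply: big1_seq => i /andP[_]; rewrite mem_index_iota => /andP[_ hi].
by rewrite dltZl Hj ?scaler0.
Qed.
End Fam.
Section Cont.
Hypothesis Hc : continuous (fun p : E * E * E => tp p.1.1 p.1.2 p.2).
Hypothesis HT : continuous T.

Lemma cont3 (f g h : E -> E) x : {for x, continuous f} -> {for x, continuous g} ->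
  {for x, continuous h} -> {for x, continuous (fun a => tp (f a) (g a) (h a))}.
Proof.
move=> hf hg hh.
apply: (@continuous_cvg _ _ _ (nbhs x) _ (fun a => ((f a, g a), h a))
  (fun p : E * E * E => tp p.1.1 p.1.2 p.2) ((f x, g x), h x)); first exact: Hc.
exact: cvg_pair (cvg_pair hf hg) hh.
Qed.

Lemma qcont : continuous (fun x => dlt x x x).
Proof.
move=> x; rewrite /dlt.
have hid : {for x, continuous (fun a : E => a)} by exact: cvg_id.
apply: cvgB; [apply: cvgB; [apply: cvgB|]|].
- apply: (@continuous_cvg _ _ _ (nbhs x) _ (fun a => tp a a a) T); first exact: HT.
  by apply: cont3; try exact: HT; try exact: hid.
- by apply: cont3; try exact: HT; try exact: hid.
- by apply: cont3; try exact: HT; try exact: hid.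
- by apply: cont3; try exact: HT; try exact: hid.
Qed.
End Cont.
Lemma dense_zero (q : E -> E) : continuous q ->
  (forall x (eps : R), 0 < eps -> exists a, `|x - a| < (eps%:C)%C /\ q a = 0) ->
  forall x, q x = 0.
Proof.
move=> Hq Hd x; apply/eqP; apply/negPn/negP => nz.
have hp : 0 < `|q x| by rewrite normr_gt0.
have := @cvgr_dist_lt _ _ _ (nbhs x) _ q (q x) (Hq x) _ hp.
move=> H; have [r r0 hr] := iffLR (nbhs_normP x _) (H _).
have r0c : ((0 : R[i]) < r) := r0.
have r0' : 0 < complex.Re r by move: r0c; rewrite ltcE => /andP[_].
have rI : complex.Im r = 0 by move: r0c; rewrite ltcE => /andP[/eqP -> _].
have hrr : ((complex.Re r)%:C)%C = r.
  by rewrite [RHS]complexE rI mulr0 addr0.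
have [a [ha qa]] := Hd x _ r0'.
rewrite hrr in ha.
have := hr a ha; rewrite /= qa subr0 ltxx //.
Qed.

Lemma main_sec (Hc : continuous (fun p : E * E * E => tp p.1.1 p.1.2 p.2))
  (HT : continuous T) (Htot : tripotents_norm_total tp) :
  (triple_derivation tp T <->
     (forall e : E, tripotent tp e ->
        triple_derivation_on tp (Peirce02 tp e) (fun x => P0 tp e (T x) + P2 tp e (T x))))
  /\
  (triple_derivation tp T <->
     (forall e : E, tripotent tp e ->
        triple_derivation_on tp (Peirce tp 2 e) (fun x => P2 tp e (T x))
        /\ P0 tp e (T e) = 0)).
Proof.
have AB : triple_derivation tp T -> forall e : E, tripotent tp e ->
        triple_derivation_on tp (Peirce02 tp e) (fun x => P0 tp e (T x) + P2 tp e (T x)).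
  by move=> hd e He; exact: a_to_b.
have BC : (forall e : E, tripotent tp e ->
        triple_derivation_on tp (Peirce02 tp e) (fun x => P0 tp e (T x) + P2 tp e (T x))) ->
        (forall e : E, tripotent tp e ->
        triple_derivation_on tp (Peirce tp 2 e) (fun x => P2 tp e (T x))
        /\ P0 tp e (T e) = 0).
  by move=> hb e He; apply: b_to_c => //; exact: hb.
have CA : (forall e : E, tripotent tp e ->
        triple_derivation_on tp (Peirce tp 2 e) (fun x => P2 tp e (T x))
        /\ P0 tp e (T e) = 0) -> triple_derivation tp T.
  move=> hc.
  have Hq u (Hu : tp u u u = u) : dlt u u u = 0 by apply: c_trip => //; exact: hc.
  have Hz : forall x, dlt x x x = 0.
    apply: (dense_zero (qcont Hc HT)) => x eps eps0.
    have [s [h1 h2 h3]] := Htot x eps eps0.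
    by exists (\sum_(p <- s) p.1 *: p.2); split => //; exact: (fam_zero Hq h1 h2).
  move=> a b c; have := polar Hz a b c; rewrite /dlt.
  at4 (T (tp a b c)) (tp (T a) b c) (tp a (T b) c) (tp a b (T c)) => h; lcH h; lcG.
  by apply: (lc_comb1 (k1 := 1) h); lc_fin.
split; split.
- exact: AB.
- by move=> hb; apply: CA; apply: BC.
- by move=> h; apply: BC; apply: AB.
- exact: CA.
Qed.
End Alg.

Unset Implicit Arguments.
Unset Strict Implicit.

Theorem mainTheorem3 (R : realType) (E : completeNormedModType R[i])
  (tp : E -> E -> E -> E) (HJB : is_JBstar_triple tp)
  (Htot : tripotents_norm_total tp)
  (T : {linear E -> E}) (HT : continuous T) :
  (triple_derivation tp T <->
     (forall e : E, tripotent tp e ->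
        triple_derivation_on tp (Peirce02 tp e) (fun x => P0 tp e (T x) + P2 tp e (T x))))
  /\
  (triple_derivation tp T <->
     (forall e : E, tripotent tp e ->
        triple_derivation_on tp (Peirce tp 2 e) (fun x => P2 tp e (T x))
        /\ P0 tp e (T e) = 0)).
Proof.
case: HJB => [[Hlin Hsym] [Hmid Hcont] Hjor _ Hnorm].
have Hjor' : forall a b x y z, tp a b (tp x y z) =
    tp x y (tp a b z) + tp (tp a b x) y z - tp x (tp b a y) z.
  by move=> a b x y z; exact: (Hjor a b x y z).
exact: (main_sec Hlin Hsym Hmid Hjor' Hnorm Hcont HT Htot).
Qed.
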